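(* Let $(a_k)_{k\in\mathbb N}$ be positive numbers with $\sum_ka_k=\infty$, and suppose there exist $C\ge1$, $\alpha\in(0,1)$ and $k_*$ such that $a_{k_2}\le Ca_{k_1}$ for all integers $k_*\le k_1\le k_2\le k_1+k_1^\alpha$. Let $b_k=\min\{a_k,k^{-\alpha}\}$. Then $b_{k_2}\le Cb_{k_1}$ for all integers $k_*\le k_1\le k_2\le k_1+k_1^\alpha$, and $\sum_kb_k=\infty$. *)

(* Defs.v *)
From Stdlib Require Import Reals.
From Coquelicot Require Import Coquelicot.
Open Scope R_scope.

(* x^a for x >= 0 and real a > 0, with the convention 0^a = 0. *)
Definition rpow (x a : R) : R := if Req_EM_T x 0 then 0 else Rpower x a.

(* b_k = min(a_k, k^(-alpha)), with k^(-alpha) = +infinity at k = 0,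
   so b_0 = a_0. *)
Definition bseq (a : nat -> R) (alpha : R) (k : nat) : R :=
  match k with
  | O => a O
  | S _ => Rmin (a k) (Rpower (INR k) (- alpha))
  end.

Definition doubling_cond (a : nat -> R) (C alpha : R) (kstar : nat) : Prop :=
  forall k1 k2 : nat, (kstar <= k1)%nat -> (k1 <= k2)%nat ->
    INR k2 <= INR k1 + rpow (INR k1) alpha -> a k2 <= C * a k1.

Definition series_diverges (a : nat -> R) : Prop :=
  is_lim_seq (fun n => sum_n a n) p_infty.

(* Main.v *)
Require Import Defs.
From Stdlib Require Import Reals.
From Coquelicot Require Import Coquelicot.
From Stdlib Require Import Lra Lia Classical.
Open Scope R_scope.

Lemma exp_mono x y : x <= y -> exp x <= exp y.
Proof. intros H; destruct (Rle_lt_or_eq_dec _ _ H) as [h|h].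
  left; apply exp_increasing; exact h. rewrite h; lra. Qed.

Lemma Rpower_pos x e : 0 < Rpower x e.
Proof. unfold Rpower; apply exp_pos. Qed.

Lemma powle x y e : 0 < x -> x <= y -> 0 <= e -> Rpower x e <= Rpower y e.
Proof. intros. unfold Rpower. apply exp_mono. apply Rmult_le_compat_l; auto.
  apply ln_le; auto. Qed.

Lemma powle_neg x y e : 0 < x -> x <= y -> e <= 0 -> Rpower y e <= Rpower x e.
Proof. intros. unfold Rpower. apply exp_mono.
  assert (ln x <= ln y) by (apply ln_le; auto). nra. Qed.

Lemma rpow_eq x e : 0 < x -> rpow x e = Rpower x e.
Proof. intros; unfold rpow; destruct (Req_EM_T x 0); lra. Qed.

Lemma bseq_S a alpha k : (1 <= k)%nat ->
  bseq a alpha k = Rmin (a k) (Rpower (INR k) (- alpha)).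
Proof. intros; destruct k; [lia|reflexivity]. Qed.

Lemma bseq_pos a alpha : (forall k, 0 < a k) -> forall k, 0 < bseq a alpha k.
Proof. intros H k; destruct k; simpl; auto.
  apply Rmin_glb_lt; auto; apply Rpower_pos. Qed.

Lemma sum_nonneg b n m : (forall k, 0 <= b k) -> 0 <= sum_n_m b n m.
Proof. intros H. eapply Rle_trans; [|apply sum_n_m_le with (a:=fun _ => 0); exact H].
  rewrite sum_n_m_const; lra. Qed.

Lemma sum_lower_loc b c n m : (forall k, (n<=k<=m)%nat -> c <= b k) ->
  INR (S m - n) * c <= sum_n_m b n m.
Proof.
  intros H. set (g := fun k => if andb (Nat.leb n k) (Nat.leb k m) then b k else c).
  rewrite <- sum_n_m_const.
  rewrite (sum_n_m_ext_loc b g).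
  - apply sum_n_m_le. intro k; unfold g.
    destruct (Nat.leb_spec n k), (Nat.leb_spec k m); simpl; try lra; apply H; lia.
  - intros k Hk; unfold g.
    destruct (Nat.leb_spec n k), (Nat.leb_spec k m); simpl; try reflexivity; lia.
Qed.

Lemma div_of_blocks (b : nat -> R) eps : 0 < eps -> (forall k, 0 <= b k) ->
  (forall N, exists M, (N<=M)%nat /\ eps <= sum_n_m b N M) ->
  is_lim_seq (sum_n b) p_infty.
Proof.
  intros He Hb H.
  assert (Hn : forall n:nat, exists M, INR n * eps <= sum_n b M).
  { induction n.
    - exists 0%nat. simpl. rewrite Rmult_0_l. unfold sum_n. apply sum_nonneg; auto.
    - destruct IHn as [M HM]. destruct (H (S M)) as [M' [HM' HS]]. exists M'.
      unfold sum_n in *. rewrite (sum_n_m_Chasles b 0 M M') by lia.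
      change (plus ?x ?y) with (x + y). rewrite S_INR. lra. }
  assert (Hmono : forall M m, (M <= m)%nat -> sum_n b M <= sum_n b m).
  { intros M m Hm. unfold sum_n. rewrite (sum_n_m_Chasles b 0 M m) by lia.
    change (plus ?x ?y) with (x + y). assert (0 <= sum_n_m b (S M) m) by (apply sum_nonneg; auto).
    lra. }
  apply is_lim_seq_spec. intros Mb.
  destruct (nfloor_ex (Rmax 0 (Mb / eps))) as [n [Hn1 Hn2]]; [apply Rmax_l|].
  destruct (Hn (S n)) as [M HM]. exists M. intros m Hm.
  eapply Rlt_le_trans; [|apply Hmono; exact Hm].
  eapply Rlt_le_trans; [|exact HM]. rewrite S_INR.
  assert (Mb / eps < INR n + 1) by (eapply Rle_lt_trans; [apply Rmax_r|exact Hn2]).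
  assert (Mb = (Mb/eps) * eps) by (field; lra). nra.
Qed.

Lemma part1 (a : nat -> R) (C alpha : R) (kstar : nat)
  (Hpos : forall k, 0 < a k) (HC : 1 <= C) (Halpha0 : 0 < alpha)
  (Hreg : doubling_cond a C alpha kstar) :
  doubling_cond (bseq a alpha) C alpha kstar.
Proof.
  intros k1 k2 H1 H2 H3.
  destruct k1 as [|k1'].
  - simpl in H3. unfold rpow in H3. destruct (Req_EM_T 0 0); [|lra].
    assert (k2 = 0%nat). { destruct k2; auto. rewrite S_INR in H3. pose proof (pos_INR k2). lra. }
    subst. simpl. pose proof (Hpos 0%nat). nra.
  - assert (Ha := Hreg _ _ H1 H2 H3).
    rewrite !bseq_S by lia.
    assert (Hp : Rpower (INR k2) (-alpha) <= Rpower (INR (S k1')) (-alpha)).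
    { apply powle_neg; [apply lt_0_INR; lia| apply le_INR; lia| lra]. }
    pose proof (Rpower_pos (INR (S k1')) (-alpha)).
    unfold Rmin. destruct (Rle_dec (a k2) _), (Rle_dec (a (S k1')) _); nra.
Qed.

Lemma key (a : nat -> R) (C alpha : R) (kstar : nat)
  (Hpos : forall k, 0 < a k)
  (Hdiv : series_diverges a)
  (HC : 1 <= C) (Halpha0 : 0 < alpha) (Halpha1 : alpha < 1)
  (Hreg : doubling_cond a C alpha kstar) :
  forall N, exists M, (N <= M)%nat /\ Rmin 1 (/(2*C)) <= sum_n_m (bseq a alpha) N M.
Proof.
  intros N. set (b := bseq a alpha).
  assert (Hb : forall k, 0 <= b k) by (intro k; left; apply bseq_pos; auto).
  set (K := (2*N + 2*kstar + 4)%nat).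
  destruct (classic (exists k1, (K <= k1)%nat /\ Rpower (INR k1) (-alpha) < a k1))
    as [[k1 [Hk1 Hak1]] | Hno].
  - assert (HK : INR K <= INR k1) by (apply le_INR; auto).
    assert (HKe : INR K = 2 * INR N + 2 * INR kstar + 4).
    { unfold K. rewrite !plus_INR, !mult_INR. simpl. lra. }
    pose proof (pos_INR N). pose proof (pos_INR kstar).
    assert (Hk1pos : 0 < INR k1) by lra.
    set (t := Rpower (INR k1) alpha).
    assert (Ht1 : 1 <= t).
    { unfold t. rewrite <- (Rpower_O (INR k1)) by lra. apply Rle_Rpower; lra. }
    assert (Htk : t <= INR k1).
    { unfold t. rewrite <- (Rpower_1 (INR k1)) at 2 by lra. apply Rle_Rpower; lra. }
    destruct (nfloor_ex (t/2)) as [m [Hm1 Hm2]]; [lra|].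
    assert (Hmk : (m <= k1)%nat) by (apply INR_le; lra).
    set (L := (k1 - m)%nat).
    assert (HL : INR L = INR k1 - INR m) by (unfold L; apply minus_INR; auto).
    assert (HNL : (N < L)%nat) by (apply INR_lt; lra).
    assert (Hinv : Rpower (INR k1) (-alpha) = / t) by (unfold t; apply Rpower_Ropp).
    assert (Htpos : 0 < t) by lra.
    set (c := / C * Rpower (INR k1) (- alpha)).
    assert (Hwin : forall j, (L <= j <= k1)%nat -> c <= b j).
    { intros j Hj.
      assert (Hj1 : INR L <= INR j) by (apply le_INR; lia).
      assert (Hj2 : INR j <= INR k1) by (apply le_INR; lia).
      assert (Hjpos : 0 < INR j) by lra.
      assert (Hpj : t / 2 <= Rpower (INR j) alpha).
      { apply Rle_trans with (Rpower (INR k1 * /2) alpha).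
        - rewrite <- Rpower_mult_distr by lra. fold t.
          assert (Rpower (/2) alpha = / Rpower 2 alpha).
          { unfold Rpower. rewrite ln_Rinv by lra.
            rewrite <- exp_Ropp. f_equal. ring. }
          rewrite H1.
          assert (Rpower 2 alpha <= 2).
          { rewrite <- (Rpower_1 2) at 2 by lra. apply Rle_Rpower; lra. }
          pose proof (Rpower_pos 2 alpha).
          apply Rmult_le_compat_l; [lra|]. apply Rinv_le_contravar; lra.
        - apply powle; lra. }
      assert (Hr : a k1 <= C * a j).
      { apply Hreg.
        - apply INR_le. lra.
        - lia.
        - rewrite rpow_eq by lra. lra. }
      unfold b. rewrite bseq_S by (apply INR_le; simpl; lra).
      apply Rmin_glb.
      + unfold c. apply Rmult_le_reg_l with C; [lra|].
        rewrite <- Rmult_assoc, Rinv_r by lra. lra.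
      + unfold c. apply Rle_trans with (Rpower (INR k1) (-alpha)).
        * pose proof (Rpower_pos (INR k1) (-alpha)).
          assert (/C <= 1) by (rewrite <- Rinv_1; apply Rinv_le_contravar; lra).
          nra.
        * apply powle_neg; lra. }
    exists k1. split; [apply INR_le; lra|].
    assert (Hsplit : sum_n_m b N k1 = sum_n_m b N (pred L) + sum_n_m b L k1).
    { replace L with (S (pred L)) at 2 by lia.
      apply (sum_n_m_Chasles b N (pred L) k1); lia. }
    rewrite Hsplit.
    pose proof (sum_nonneg b N (pred L) Hb).
    pose proof (sum_lower_loc b c L k1 Hwin).
    assert (HSm : INR (S k1 - L) = INR m + 1).
    { unfold L. replace (S k1 - (k1 - m))%nat with (S m) by lia. apply S_INR. }
    rewrite HSm in H2.
    assert (Hc : (INR m + 1) * c >= / (2 * C)).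
    { unfold c. rewrite Hinv.
      assert (/ (2*C) = (t/2) * (/ C * / t)) by (field; lra).
      rewrite H3. apply Rle_ge. apply Rmult_le_compat_r; [|lra].
      apply Rmult_le_pos; left; apply Rinv_0_lt_compat; lra. }
    pose proof (Rmin_r 1 (/(2*C))). lra.
  - assert (Hle : forall k, (K <= k)%nat -> a k <= Rpower (INR k) (-alpha)).
    { intros k Hk. apply Rnot_lt_le. intro Hc. apply Hno. exists k; auto. }
    unfold series_diverges in Hdiv. apply is_lim_seq_spec in Hdiv.
    destruct (Hdiv (sum_n a K + 1)) as [N0 HN0].
    set (M := Nat.max N0 (S K)).
    exists M. split; [unfold M, K; lia|].
    assert (Hsplit : sum_n_m b N M = sum_n_m b N K + sum_n_m b (S K) M).
    { apply (sum_n_m_Chasles b N K M); unfold M, K; lia. }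
    rewrite Hsplit.
    pose proof (sum_nonneg b N K Hb).
    assert (Heq : sum_n_m b (S K) M = sum_n_m a (S K) M).
    { apply sum_n_m_ext_loc. intros k Hk. unfold b. rewrite bseq_S by lia.
      apply Rmin_left. apply Hle. lia. }
    assert (Hs : sum_n_m a (S K) M = sum_n a M - sum_n a K).
    { exact (sum_n_m_sum_n (G:=R_AbelianGroup) a K M ltac:(unfold M; lia)). }
    rewrite Heq, Hs.
    assert (sum_n a K + 1 < sum_n a M) by (apply HN0; unfold M; lia).
    pose proof (Rmin_l 1 (/(2*C))). lra.
Qed.

Theorem lemma4p3 (a : nat -> R) (C alpha : R) (kstar : nat)
  (Hpos : forall k, 0 < a k)
  (Hdiv : series_diverges a)
  (HC : 1 <= C) (Halpha0 : 0 < alpha) (Halpha1 : alpha < 1)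
  (Hreg : doubling_cond a C alpha kstar) :
  doubling_cond (bseq a alpha) C alpha kstar /\ series_diverges (bseq a alpha).
Proof.
  split.
  - apply part1; auto.
  - apply (div_of_blocks _ (Rmin 1 (/(2*C)))).
    + apply Rmin_glb_lt; [lra|]. apply Rinv_0_lt_compat; lra.
    + intro k; left; apply bseq_pos; auto.
    + apply key with kstar; auto.
Qed.
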